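(* Let $B$ be the 3-manifold that is the $T^2$-bundle over $S^1$ with monodromy $-\mathrm{id}:T^2\to T^2$ (induced by $\begin{pmatrix}-1&0\\0&-1\end{pmatrix}$ on $\mathbb{R}^2/\mathbb{Z}^2$). Then $B$ smoothly embeds in $S^4$. *)

(* Defs.v *)
From HB Require Import structures.
From mathcomp Require Import all_boot all_order all_algebra.
From mathcomp Require Import all_classical all_reals all_analysis.
From mathcomp Require Import Rstruct Rstruct_topology.
From Stdlib Require Import Rdefinitions.
Set Implicit Arguments. Unset Strict Implicit. Unset Printing Implicit Defensive.
Import Order.TTheory GRing.Theory Num.Theory.
Import numFieldNormedType.Exports.
Local Open Scope ring_scope.

Notation RR := Rdefinitions.R.

Fixpoint Ck (V W : normedModType RR) (k : nat) (f : V -> W) : Prop :=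
  match k with
  | 0 => continuous f
  | k'.+1 => (forall x, differentiable f x) /\
             (forall v : V, Ck k' (fun x => derive f x v))
  end.

Definition smooth (V W : normedModType RR) (f : V -> W) : Prop :=
  forall k, Ck k f.

(* The deck group Gamma of the covering R^3 -> B, where B is the mapping torus
   of -id on T^2 = R^2/Z^2 (coordinates (t, a, b), t the base coordinate):
   (t, a, b) |-> (t + n, (-1)^n a + m1, (-1)^n b + m2),  n m1 m2 : int. *)
Definition deck (n m1 m2 : int) (x : 'rV[RR]_3) : 'rV[RR]_3 :=
  \row_(i < 3)
    (if val i == 0%N then x ord0 i + n%:~R
     else (-1) ^ n * x ord0 i + (if val i == 1%N then m1 else m2)%:~R).

Definition in_S4 (y : 'rV[RR]_5) : Prop := \sum_(i < 5) (y ord0 i) ^+ 2 = 1.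

(* A smooth embedding B -> S^4, expressed on the universal cover: a smooth
   Gamma-invariant map R^3 -> R^5 with values in S^4, injective modulo Gamma,
   with injective differential everywhere.  Since B is compact, an injective
   immersion of B is a smooth embedding. *)
Definition smooth_embedding_B_S4 (f : 'rV[RR]_3 -> 'rV[RR]_5) : Prop :=
  [/\ smooth f,
      (forall x, in_S4 (f x)),
      (forall n m1 m2 x, f (deck n m1 m2 x) = f x),
      (forall x y, f x = f y -> exists n m1 m2, y = deck n m1 m2 x) &
      (forall x v, derive f x v = 0 -> v = 0)].

(* Main.v *)
Require Import Defs.
From mathcomp Require Import all_boot all_order all_algebra.
From mathcomp Require Import all_classical all_reals all_analysis.
From mathcomp Require Import Rstruct Rstruct_topology.
From mathcomp Require Import ring lra.
Unset Printing Implicit Defensive.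
Import Order.TTheory GRing.Theory Num.Theory.
Import numFieldNormedType.Exports.
Local Open Scope ring_scope.

Section Calc.
Variable R : realType.

Inductive expr :=
| Const of R
| Coord of 'I_3
| Add of expr & expr
| Mul of expr & expr
| Sin of expr
| Cos of expr.

Fixpoint eval (e : expr) (x : 'rV[R]_3) : R :=
  match e with
  | Const c => c
  | Coord i => x ord0 i
  | Add e1 e2 => eval e1 x + eval e2 x
  | Mul e1 e2 => eval e1 x * eval e2 x
  | Sin e1 => sin (eval e1 x)
  | Cos e1 => cos (eval e1 x)
  end.

Fixpoint deriv (e : expr) (v : 'rV[R]_3) : expr :=
  match e with
  | Const _ => Const 0
  | Coord i => Const (v ord0 i)
  | Add e1 e2 => Add (deriv e1 v) (deriv e2 v)
  | Mul e1 e2 => Add (Mul e1 (deriv e2 v)) (Mul e2 (deriv e1 v))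
  | Sin e1 => Mul (Cos e1) (deriv e1 v)
  | Cos e1 => Mul (Const (-1)) (Mul (Sin e1) (deriv e1 v))
  end.

Lemma diff_sin (y : R) : differentiable (@sin R) y.
Proof. exact/derivable1_diffP/derivable_sin. Qed.
Lemma diff_cos (y : R) : differentiable (@cos R) y.
Proof. exact/derivable1_diffP/derivable_cos. Qed.

Lemma eval_diff e (x : 'rV[R]_3) : differentiable (eval e) x.
Proof.
elim: e x => [c|i|e1 IH1 e2 IH2|e1 IH1 e2 IH2|e1 IH1|e1 IH1] x /=.
- exact: differentiable_cst.
- exact: differentiable_coord.
- exact: (differentiableD (IH1 x) (IH2 x)).
- exact: (differentiableM (IH1 x) (IH2 x)).
- exact: (differentiable_comp (IH1 x) (diff_sin _)).
- exact: (differentiable_comp (IH1 x) (diff_cos _)).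
Qed.

Lemma eval_derivable e (x v : 'rV[R]_3) : derivable (eval e) x v.
Proof. exact: diff_derivable (eval_diff e x). Qed.

Lemma D_comp (g : R -> R) (f : 'rV[R]_3 -> R) (x v : 'rV[R]_3) :
  differentiable f x -> differentiable g (f x) ->
  'D_v (g \o f) x = 'D_v f x * derive1 g (f x).
Proof.
move=> df dg.
rewrite deriveE; last exact: differentiable_comp.
rewrite diff_comp // /= diff1E // -deriveE //.
Qed.

Lemma sin' (y : R) : derive1 (@sin R) y = cos y.
Proof. by rewrite derive1E derive_val. Qed.
Lemma cos' (y : R) : derive1 (@cos R) y = - sin y.
Proof. by rewrite derive1E derive_val. Qed.

Lemma eval_deriv e (v x : 'rV[R]_3) : 'D_v (eval e) x = eval (deriv e v) x.
Proof.
elim: e x => [c|i|e1 IH1 e2 IH2|e1 IH1 e2 IH2|e1 IH1|e1 IH1] x /=.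
- exact: derive_cst.
- have := @derive_mx R _ 1 3 id x v (@derivable_id R _ x v).
  rewrite derive_id => /matrixP /(_ ord0 i); rewrite mxE => <-. done.
- rewrite (deriveD (eval_derivable e1 x v) (eval_derivable e2 x v)).
  by rewrite IH1 IH2.
- rewrite (deriveM (eval_derivable e1 x v) (eval_derivable e2 x v)).
  by rewrite IH1 IH2.
- rewrite (D_comp _ _ _ v (eval_diff e1 x) (diff_sin _)) sin' IH1 mulrC.
  done.
- rewrite (D_comp _ _ _ v (eval_diff e1 x) (diff_cos _)) cos' IH1.
  by rewrite mulrC mulN1r mulNr.
Qed.

Lemma rows_diff n (E : 'I_n -> expr) (x : 'rV[R]_3) :
  differentiable (fun y => \row_j eval (E j) y : 'rV[R]_n) x.
Proof.
have -> : (fun y => \row_j eval (E j) y : 'rV[R]_n) =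
   \sum_(j < n) (fun y => eval (E j) y *: (delta_mx 0 j : 'rV[R]_n)).
  rewrite fct_sumE; apply/funext => y.
  rewrite [LHS]row_sum_delta; apply: eq_bigr => j _; by rewrite mxE.
apply: differentiable_sum => j.
exact: differentiableZl (eval_diff (E j) x).
Qed.

Lemma rows_derive n (E : 'I_n -> expr) (x v : 'rV[R]_3) :
  'D_v (fun y => \row_j eval (E j) y : 'rV[R]_n) x = \row_j eval (deriv (E j) v) x.
Proof.
rewrite derive_mx; last by apply: diff_derivable; exact: rows_diff.
apply/matrixP => i j; rewrite !mxE.
rewrite (_ : (fun t => _) = eval (E j)); first by rewrite eval_deriv.
by apply/funext => y; rewrite mxE.
Qed.
End Calc.

Lemma Ck_rows k (E : 'I_5 -> expr RR) :
  Ck k (fun y : 'rV[RR]_3 => \row_j eval RR (E j) y : 'rV[RR]_5).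
Proof.
elim: k E => [|k IH] E /=.
  by move=> x; apply: differentiable_continuous; exact: rows_diff.
split; first by move=> x; exact: rows_diff.
move=> v.
rewrite (_ : (fun x => _) = (fun y : 'rV[RR]_3 => \row_j eval RR (deriv RR (E j) v) y : 'rV[RR]_5)).
  exact: IH.
by apply/funext => y; rewrite rows_derive.
Qed.

Section Trig.
Variable R : realType.

Lemma sgn_cases (n : int) : (-1 : R) ^ n = 1 \/ (-1 : R) ^ n = -1.
Proof.
case: n => m /=.
  rewrite -exprnP -signr_odd; case: (odd m); rewrite ?expr0 ?expr1; by [right|left].
change (((-1 : R) ^+ m.+1)^-1 = 1 \/ ((-1 : R) ^+ m.+1)^-1 = -1).
rewrite -signr_odd; case: (odd m.+1); rewrite ?expr0 ?expr1 ?invr1 ?invrN1; by [right|left].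
Qed.

Lemma sgn_sq (n : int) : (-1 : R) ^ n * (-1) ^ n = 1.
Proof. by case: (sgn_cases n) => ->; rewrite ?mulr1 ?mulrNN ?mulr1. Qed.

Lemma cosDpin (x : R) (m : nat) : cos (x + pi * m%:R) = (-1) ^+ m * cos x.
Proof.
elim: m => [|m IH]; first by rewrite mulr0 addr0 expr0 mul1r.
by rewrite -natr1 mulrDr mulr1 addrA cosDpi IH exprS mulN1r mulNr.
Qed.

Lemma sinDpin (x : R) (m : nat) : sin (x + pi * m%:R) = (-1) ^+ m * sin x.
Proof.
elim: m => [|m IH]; first by rewrite mulr0 addr0 expr0 mul1r.
by rewrite -natr1 mulrDr mulr1 addrA sinDpi IH exprS mulN1r mulNr.
Qed.

Lemma NegzR (m : nat) : (Negz m)%:~R = - (m.+1)%:R :> R.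
Proof. by rewrite NegzE mulrNz. Qed.

Lemma NegzS (m : nat) : (-1 : R) ^ (Negz m) = (-1) ^+ m.+1.
Proof. by change (((-1 : R) ^+ m.+1)^-1 = (-1) ^+ m.+1); rewrite -exprVn invrN1. Qed.

Lemma sgnsq_nat (m : nat) : (-1 : R) ^+ m * (-1) ^+ m = 1.
Proof. by rewrite -exprMn mulN1r opprK expr1n. Qed.

Lemma cosDpiz (x : R) (n : int) : cos (x + pi * n%:~R) = (-1) ^ n * cos x.
Proof.
case: n => m; first exact: cosDpin.
rewrite NegzR NegzS mulrN.
have := cosDpin (x - pi * (m.+1)%:R) m.+1; rewrite subrK => ->.
by rewrite mulrA sgnsq_nat mul1r.
Qed.

Lemma sinDpiz (x : R) (n : int) : sin (x + pi * n%:~R) = (-1) ^ n * sin x.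
Proof.
case: n => m; first exact: sinDpin.
rewrite NegzR NegzS mulrN.
have := sinDpin (x - pi * (m.+1)%:R) m.+1; rewrite subrK => ->.
by rewrite mulrA sgnsq_nat mul1r.
Qed.

Lemma cosD2piz (x : R) (n : int) : cos (x + 2 * pi * n%:~R) = cos x.
Proof.
rewrite (_ : 2 * pi * n%:~R = pi * n%:~R + pi * n%:~R); last by ring.
by rewrite addrA !cosDpiz mulrA sgn_sq mul1r. Qed.

Lemma sinD2piz (x : R) (n : int) : sin (x + 2 * pi * n%:~R) = sin x.
Proof.
rewrite (_ : 2 * pi * n%:~R = pi * n%:~R + pi * n%:~R); last by ring.
by rewrite addrA !sinDpiz mulrA sgn_sq mul1r. Qed.


Lemma intrNR (k : int) : (- k)%:~R = - (k%:~R) :> R.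
Proof. by rewrite mulrNz. Qed.

Lemma cos_eq1 (x : R) : cos x = 1 -> exists k : int, x = 2 * pi * k%:~R.
Proof.
move=> cx.
have hp := @pi_gt0 R.
set q := x / (2 * pi).
have xq : x = 2 * pi * q by rewrite /q mulrC divfK // mulf_neq0 // ?gt_eqF.
set k := Num.floor q.
have k1 : k%:~R <= q by exact: floor_le.
have k2 : q < (k + 1)%:~R by exact: floorD1_gt.
rewrite intrD in k2.
exists k.
set r := x - 2 * pi * k%:~R.
have cr : cos r = 1.
  by rewrite /r -mulrN -intrNR cosD2piz.
have r0 : 0 <= r by rewrite /r xq; nra.
have r1 : r < 2 * pi by rewrite /r xq; nra.
suff : r = 0 by rewrite /r => /eqP; rewrite subr_eq0 => /eqP.
have [rle|rgt] := leP r pi.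
  apply: (@cos_inj R); rewrite ?cos0 ?in_itv /= ?r0 ?rle ?lexx ?pi_ge0 //.
exfalso.
set r' := 2 * pi - r.
have cr' : cos r' = 1.
  rewrite /r' addrC -[2 * pi]mulr1 -[1 : R]/((1 : int)%:~R) cosD2piz cosN //.
have : r' = 0.
  apply: (@cos_inj R); rewrite ?cos0 ?in_itv /= ?lexx ?pi_ge0 ?andbT //.
  by apply/andP; split; rewrite /r'; lra.
rewrite /r'; lra.
Qed.

Lemma cs_eq (x y : R) : cos x = cos y -> sin x = sin y ->
  exists k : int, y = x + 2 * pi * k%:~R.
Proof.
move=> c s.
have : cos (y - x) = 1 by rewrite cosB c s -!expr2 cos2Dsin2.
move=> /cos_eq1 [k hk]; exists k; rewrite -hk; ring.
Qed.

End Trig.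

Arguments Const {R} _.
Arguments Coord {R} _.
Arguments Add {R} _ _.
Arguments Mul {R} _ _.
Arguments Sin {R} _.
Arguments Cos {R} _.

Definition i0 : 'I_3 := @Ordinal 3 0 isT.
Definition i1 : 'I_3 := @Ordinal 3 1 isT.
Definition i2 : 'I_3 := @Ordinal 3 2 isT.

Notation K c := (@Const RR c).
Definition eA := Mul (K (2 * pi)) (Coord i1).
Definition eB := Mul (K (2 * pi)) (Coord i2).
Definition eT := Mul (K pi) (Coord i0).
Definition eP := Mul (K (2 * pi)) (Coord i0).
Definition eR := Add (K 36) (Mul (K 20) (Cos eB)).
Definition eH := Add (K 48) (Mul (K (-15)) (Cos eB)).
Definition y1 := Mul eR (Cos eA).
Definition y2 := Add (Mul (Mul eR (Sin eA)) (Cos eT)) (Mul (K (-25)) (Mul (Sin eB) (Sin eT))).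
Definition y3 := Mul eH (Cos eP).
Definition y4 := Mul eH (Sin eP).
Definition y5 := Add (Mul (Mul eR (Sin eA)) (Sin eT)) (Mul (K 25) (Mul (Sin eB) (Cos eT))).
Definition E (j : 'I_5) : expr RR := Mul (K (65^-1)) (nth (K 0) [:: y1; y2; y3; y4; y5] j).
Definition F (x : 'rV[RR]_3) : 'rV[RR]_5 := \row_j eval RR (E j) x.

Lemma F_smooth : smooth F.
Proof. move=> k; exact: Ck_rows. Qed.

Lemma circ (u : RR) : cos u ^+ 2 + sin u ^+ 2 - 1 = 0.
Proof. by rewrite cos2Dsin2 subrr. Qed.

Lemma S4_alg (cA sA cB sB cT sT cP sP : RR) :
  cA^+2 + sA^+2 - 1 = 0 -> cB^+2 + sB^+2 - 1 = 0 ->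
  cT^+2 + sT^+2 - 1 = 0 -> cP^+2 + sP^+2 - 1 = 0 ->
  (65^-1 * ((36 + 20 * cB) * cA)) ^+ 2 +
  ((65^-1 * ((36 + 20 * cB) * sA * cT + -25 * (sB * sT))) ^+ 2 +
   ((65^-1 * ((48 + -15 * cB) * cP)) ^+ 2 +
    ((65^-1 * ((48 + -15 * cB) * sP)) ^+ 2 +
     ((65^-1 * ((36 + 20 * cB) * sA * sT + 25 * (sB * cT))) ^+ 2 + 0)))) = 1.
Proof.
move=> hA hB hT hP.
apply/eqP; rewrite -subr_eq0; apply/eqP.
rewrite (_ : _ - 1 = (65^-1)^+2 * ((36 + 20 * cB)^+2 * (cA^+2 + sA^+2 - 1)
   + ((36 + 20 * cB)^+2 * sA^+2 + 625 * sB^+2) * (cT^+2 + sT^+2 - 1)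
   + (48 + -15 * cB)^+2 * (cP^+2 + sP^+2 - 1) + 625 * (cB^+2 + sB^+2 - 1))).
  by rewrite hA hB hT hP !mulr0 !addr0 mulr0.
by field.
Qed.

Lemma F_S4 x : in_S4 (F x).
Proof.
rewrite /in_S4 !big_ord_recl big_ord0 !mxE /=.
by apply: S4_alg; apply: circ.
Qed.

Lemma F_inv n m1 m2 x : F (deck n m1 m2 x) = F x.
Proof.
set t := x ord0 i0; set a := x ord0 i1; set b := x ord0 i2.
have d0 : deck n m1 m2 x ord0 i0 = t + n%:~R by rewrite /deck mxE.
have d1 : deck n m1 m2 x ord0 i1 = (-1) ^ n * a + m1%:~R by rewrite /deck mxE.
have d2 : deck n m1 m2 x ord0 i2 = (-1) ^ n * b + m2%:~R by rewrite /deck mxE.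
have cP : cos (2 * pi * (t + n%:~R)) = cos (2 * pi * t) by rewrite mulrDr cosD2piz.
have sP : sin (2 * pi * (t + n%:~R)) = sin (2 * pi * t) by rewrite mulrDr sinD2piz.
have cT : cos (pi * (t + n%:~R)) = (-1) ^ n * cos (pi * t) by rewrite mulrDr cosDpiz.
have sT : sin (pi * (t + n%:~R)) = (-1) ^ n * sin (pi * t) by rewrite mulrDr sinDpiz.
have cA : cos (2 * pi * ((-1) ^ n * a + m1%:~R)) = cos (2 * pi * ((-1) ^ n * a)) by rewrite mulrDr cosD2piz.
have sA : sin (2 * pi * ((-1) ^ n * a + m1%:~R)) = sin (2 * pi * ((-1) ^ n * a)) by rewrite mulrDr sinD2piz.
have cB : cos (2 * pi * ((-1) ^ n * b + m2%:~R)) = cos (2 * pi * ((-1) ^ n * b)) by rewrite mulrDr cosD2piz.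
have sB : sin (2 * pi * ((-1) ^ n * b + m2%:~R)) = sin (2 * pi * ((-1) ^ n * b)) by rewrite mulrDr sinD2piz.
apply/rowP => j; rewrite !mxE.
case: j => [[|[|[|[|[|j]]]]] hj] //=; rewrite ?d0 ?d1 ?d2 ?cP ?sP ?cT ?sT ?cA ?sA ?cB ?sB;
  case: (sgn_cases RR n) => ->; rewrite ?mul1r ?mulN1r ?mulrN ?cosN ?sinN; ring.
Qed.

Lemma lc (a b p q : RR) : p = 0 -> q = 0 -> a * p + b * q = 0.
Proof. by move=> -> ->; rewrite !mulr0 addr0. Qed.

Lemma cancel_pos (c y : RR) : 0 < c -> c * y = 0 -> y = 0.
Proof. by move=> c0 /eqP; rewrite mulf_eq0 gt_eqF //= => /eqP. Qed.

Lemma F_imm x v : 'D_v F x = 0 -> v = 0.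
Proof.
rewrite /F rows_derive => h.
have Z1 := congr1 (fun M : 'M[RR]_(1,5) => M ord0 (@Ordinal 5 0 isT)) h.
have Z2 := congr1 (fun M : 'M[RR]_(1,5) => M ord0 (@Ordinal 5 1 isT)) h.
have Z3 := congr1 (fun M : 'M[RR]_(1,5) => M ord0 (@Ordinal 5 2 isT)) h.
have Z4 := congr1 (fun M : 'M[RR]_(1,5) => M ord0 (@Ordinal 5 3 isT)) h.
have Z5 := congr1 (fun M : 'M[RR]_(1,5) => M ord0 (@Ordinal 5 4 isT)) h.
rewrite /= !mxE /= in Z1 Z2 Z3 Z4 Z5.
move: Z1 Z2 Z3 Z4 Z5.
set cA := cos (2 * pi * x ord0 i1); set sA := sin (2 * pi * x ord0 i1).
set cB := cos (2 * pi * x ord0 i2); set sB := sin (2 * pi * x ord0 i2).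
set cT := cos (pi * x ord0 i0); set sT := sin (pi * x ord0 i0).
set cP := cos (2 * pi * x ord0 i0); set sP := sin (2 * pi * x ord0 i0).
set vt := v ord0 i0; set va := v ord0 i1; set vb := v ord0 i2.
move=> Z1 Z2 Z3 Z4 Z5.
have hA : cA ^+ 2 + sA ^+ 2 = 1 by exact: cos2Dsin2.
have hB : cB ^+ 2 + sB ^+ 2 = 1 by exact: cos2Dsin2.
have hT : cT ^+ 2 + sT ^+ 2 = 1 by exact: cos2Dsin2.
have hP : cP ^+ 2 + sP ^+ 2 = 1 by exact: cos2Dsin2.
have pi0 : 0 < pi :> RR by exact: pi_gt0.
have cB1 : cB <= 1 by exact: cos_le1.
have cB2 : -1 <= cB by exact: cos_geN1.
have H0 : 0 < 48 + -15 * cB by lra.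
have R0 : 0 < 36 + 20 * cB by lra.
have i65 : 0 < 65^-1 :> RR by rewrite invr_gt0.
have vt0 : vt = 0.
  apply: (@cancel_pos (65^-1 * (48 + -15 * cB) * (2 * pi))); first by rewrite !mulr_gt0.
  have K := lc cP (- sP) _ _ Z4 Z3.
  rewrite [LHS](_ : forall y : RR, y = y * (cP ^+ 2 + sP ^+ 2)); last by move=> y; rewrite hP mulr1.
  apply: (etrans _ K); ring.
rewrite vt0 in Z1 Z2 Z3 Z4 Z5.
have sb0 : sB * vb = 0.
  apply: (@cancel_pos (65^-1 * 15 * (2 * pi))); first by rewrite !mulr_gt0.
  have K := lc cP sP _ _ Z3 Z4.
  rewrite [LHS](_ : forall y : RR, y = y * (cP ^+ 2 + sP ^+ 2)); last by move=> y; rewrite hP mulr1.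
  apply: (etrans _ K); ring.
have cb0 : cB * vb = 0.
  apply: (@cancel_pos (65^-1 * 25 * (2 * pi))); first by rewrite !mulr_gt0.
  have K := lc cT (- sT) _ _ Z5 Z2.
  rewrite [LHS](_ : forall y : RR, y = y * (cT ^+ 2 + sT ^+ 2)); last by move=> y; rewrite hT mulr1.
  apply: (etrans _ K); ring.
have vb0 : vb = 0.
  rewrite [LHS](_ : forall y : RR, y = y * (cB ^+ 2 + sB ^+ 2)); last by move=> y; rewrite hB mulr1.
  rewrite (_ : vb * _ = cB * (cB * vb) + sB * (sB * vb)); last by ring.
  by rewrite cb0 sb0 !mulr0 addr0.
rewrite vb0 in Z1 Z2 Z3 Z4 Z5.
have ca0 : cA * va = 0.
  apply: (@cancel_pos (65^-1 * (36 + 20 * cB) * (2 * pi))); first by rewrite !mulr_gt0.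
  have K := lc cT sT _ _ Z2 Z5.
  rewrite [LHS](_ : forall y : RR, y = y * (cT ^+ 2 + sT ^+ 2)); last by move=> y; rewrite hT mulr1.
  apply: (etrans _ K); ring.
have sa0 : sA * va = 0.
  apply: (@cancel_pos (65^-1 * (36 + 20 * cB) * (2 * pi))); first by rewrite !mulr_gt0.
  apply/eqP; rewrite -oppr_eq0; apply/eqP; apply: (etrans _ Z1); ring.
have va0 : va = 0.
  rewrite [LHS](_ : forall y : RR, y = y * (cA ^+ 2 + sA ^+ 2)); last by move=> y; rewrite hA mulr1.
  rewrite (_ : va * _ = cA * (cA * va) + sA * (sA * va)); last by ring.
  by rewrite ca0 sa0 !mulr0 addr0.
apply/rowP => i; rewrite mxE.
case: i => [[|[|[|i]]] hi] //.
- by rewrite -vt0; congr (v _ _); apply: val_inj.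
- by rewrite -va0; congr (v _ _); apply: val_inj.
- by rewrite -vb0; congr (v _ _); apply: val_inj.
Qed.


Lemma cos_sgn (n : int) (y : RR) : cos ((-1) ^ n * y) = cos y.
Proof. by case: (sgn_cases RR n) => ->; rewrite ?mul1r ?mulN1r ?cosN. Qed.
Lemma sin_sgn (n : int) (y : RR) : sin ((-1) ^ n * y) = (-1) ^ n * sin y.
Proof. by case: (sgn_cases RR n) => ->; rewrite ?mul1r ?mulN1r ?sinN. Qed.

Lemma subeq (p q : RR) : p = q -> p - q = 0.
Proof. by move=> ->; rewrite subrr. Qed.

Lemma F_inj x y : F x = F y -> exists n m1 m2, y = deck n m1 m2 x.
Proof.
move=> h.
have Z1 := congr1 (fun M : 'M[RR]_(1,5) => M ord0 (@Ordinal 5 0 isT)) h.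
have Z2 := congr1 (fun M : 'M[RR]_(1,5) => M ord0 (@Ordinal 5 1 isT)) h.
have Z3 := congr1 (fun M : 'M[RR]_(1,5) => M ord0 (@Ordinal 5 2 isT)) h.
have Z4 := congr1 (fun M : 'M[RR]_(1,5) => M ord0 (@Ordinal 5 3 isT)) h.
have Z5 := congr1 (fun M : 'M[RR]_(1,5) => M ord0 (@Ordinal 5 4 isT)) h.
have k65 : (65^-1 : RR) != 0 by rewrite invr_eq0.
rewrite /= !mxE /= in Z1 Z2 Z3 Z4 Z5.
move/(mulfI k65) in Z1; move/(mulfI k65) in Z2; move/(mulfI k65) in Z3.
move/(mulfI k65) in Z4; move/(mulfI k65) in Z5.
move: Z1 Z2 Z3 Z4 Z5.
set t := x ord0 i0; set a := x ord0 i1; set b := x ord0 i2.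
set t2 := y ord0 i0; set a2 := y ord0 i1; set b2 := y ord0 i2.
set cA := cos (2 * pi * a); set sA := sin (2 * pi * a).
set cB := cos (2 * pi * b); set sB := sin (2 * pi * b).
set cP := cos (2 * pi * t); set sP := sin (2 * pi * t).
set cA2 := cos (2 * pi * a2); set sA2 := sin (2 * pi * a2).
set cB2 := cos (2 * pi * b2); set sB2 := sin (2 * pi * b2).
set cP2 := cos (2 * pi * t2); set sP2 := sin (2 * pi * t2).
move=> Z1 Z2 Z3 Z4 Z5.
have hP : cP ^+ 2 + sP ^+ 2 = 1 by exact: cos2Dsin2.
have hP2 : cP2 ^+ 2 + sP2 ^+ 2 = 1 by exact: cos2Dsin2.
have hT : cos (pi * t) ^+ 2 + sin (pi * t) ^+ 2 = 1 by exact: cos2Dsin2.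
have pi0 : 0 < pi :> RR by exact: pi_gt0.
have cB1 : cB <= 1 by exact: cos_le1.
have cB1' : -1 <= cB by exact: cos_geN1.
have cB21 : cB2 <= 1 by exact: cos_le1.
have cB21' : -1 <= cB2 by exact: cos_geN1.
have eH : (48 + -15 * cB) ^+ 2 = (48 + -15 * cB2) ^+ 2.
  rewrite [LHS](_ : _ = ((48 + -15 * cB) * cP) ^+ 2 + ((48 + -15 * cB) * sP) ^+ 2); last first.
    by rewrite !exprMn -mulrDr hP mulr1.
  rewrite Z3 Z4 !exprMn -mulrDr hP2 mulr1 //.
have eB : cB2 = cB.
  have : ((48 + -15 * cB) - (48 + -15 * cB2)) * ((48 + -15 * cB) + (48 + -15 * cB2)) = 0.
    have e2 : ((48 + -15 * cB) - (48 + -15 * cB2)) * ((48 + -15 * cB) + (48 + -15 * cB2))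
       = (48 + -15 * cB) ^+ 2 - (48 + -15 * cB2) ^+ 2 by ring.
    by rewrite e2 eH subrr.
  move/eqP; rewrite mulf_eq0 => /orP [/eqP e|/eqP e]; lra.
rewrite eB in Z1 Z2 Z3 Z4 Z5.
have H0 : 48 + -15 * cB != 0 by apply/eqP; lra.
have R0 : 36 + 20 * cB != 0 by apply/eqP; lra.
move/(mulfI H0) in Z3; move/(mulfI H0) in Z4.
have [n hn] := cs_eq RR _ _ Z3 Z4.
have k2pi : (2 * pi : RR) != 0 by rewrite mulf_neq0 // gt_eqF.
have et : t2 = t + n%:~R.
  have e := hn; rewrite -mulrDr in e; exact: (mulfI k2pi e).
rewrite et mulrDr cosDpiz sinDpiz in Z2 Z5.
move: Z2 Z5 hT.
set cT := cos (pi * t); set sT := sin (pi * t).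
move=> Z2 Z5 hT.
have U : (36 + 20 * cB) * sA * (cT ^+ 2 + sT ^+ 2) =
         (-1) ^ n * ((36 + 20 * cB) * sA2) * (cT ^+ 2 + sT ^+ 2).
  apply/eqP; rewrite -subr_eq0; apply/eqP.
  apply: (etrans _ (lc cT sT _ _ (subeq _ _ Z2) (subeq _ _ Z5))); ring.
have W : 25 * sB * (cT ^+ 2 + sT ^+ 2) =
         (-1) ^ n * (25 * sB2) * (cT ^+ 2 + sT ^+ 2).
  apply/eqP; rewrite -subr_eq0; apply/eqP.
  apply: (etrans _ (lc (- sT) cT _ _ (subeq _ _ Z2) (subeq _ _ Z5))); ring.
rewrite hT !mulr1 in U W.
have k25 : (25 : RR) != 0 by [].
have esB : sB2 = (-1) ^ n * sB.
  apply: (mulfI k25).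
  rewrite (_ : 25 * ((-1) ^ n * sB) = (-1) ^ n * (25 * sB)); last by ring.
  rewrite W mulrA sgn_sq mul1r //.
have esA : sA2 = (-1) ^ n * sA.
  apply: (mulfI R0).
  rewrite (_ : (36 + 20 * cB) * ((-1) ^ n * sA) = (-1) ^ n * ((36 + 20 * cB) * sA)); last by ring.
  rewrite U mulrA sgn_sq mul1r //.
have ecA : cA2 = cA by apply: (mulfI R0); rewrite Z1.
have [m1 hm1] : exists m1 : int, 2 * pi * a2 = 2 * pi * ((-1) ^ n * a) + 2 * pi * m1%:~R.
  apply: cs_eq.
    by rewrite mulrCA cos_sgn.
  by rewrite mulrCA sin_sgn.
have [m2 hm2] : exists m2 : int, 2 * pi * b2 = 2 * pi * ((-1) ^ n * b) + 2 * pi * m2%:~R.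
  apply: cs_eq.
    by rewrite mulrCA cos_sgn -/cB -/cB2 eB.
  by rewrite mulrCA sin_sgn.
exists n, m1, m2.
apply/rowP => i; rewrite /deck mxE.
case: i => [[|[|[|i]]] hi] //=.
- rewrite (_ : Ordinal hi = i0); last by apply: val_inj.
  exact: et.
- rewrite (_ : Ordinal hi = i1); last by apply: val_inj.
  rewrite -mulrDr in hm1; exact: (mulfI k2pi hm1).
- rewrite (_ : Ordinal hi = i2); last by apply: val_inj.
  rewrite -mulrDr in hm2; exact: (mulfI k2pi hm2).
Qed.

Theorem mainTheorem8 :
  exists f : 'rV[RR]_3 -> 'rV[RR]_5, smooth_embedding_B_S4 f.
Proof.
exists F; split.
- exact: F_smooth.
- exact: F_S4.
- exact: F_inv.
- exact: F_inj.
- exact: F_imm.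
Qed.
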